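(* The scheme $X_h\subset U_h^{2,q}$ is defined by the vanishing of the polynomials $$f_{2k}=(a_{2k}^{q^2}-a_{2k})+\sum_{i=1}^{2k-1}(-1)^i a_i^q\,(a_{2k-i}^{q^2}-a_{2k-i}),\qquad 1\le k\le h-1,$$ in the coordinates $a_1,\dots,a_{2(h-1)}$ of $1+\sum a_i\tau^i$ (as usual $a_0=1$ is not a coordinate and does not occur).
   Context: Let $p$ be a prime, $q$ a power of $p$, and $h\ge2$ an integer. For a commutative $\mathbb{F}_q$-algebra $A$, $U_h^{2,q}(A)$ is the set of formal expressions $1+\sum_{i=1}^{2(h-1)}a_i\tau^i$ ($a_i\in A$) with multiplication obtained by extending $(a\tau^i)(b\tau^j)=ab^{q^i}\tau^{i+j}$ bi-additively, where $\tau^0=1$ and $\tau^k=0$ for $k>2(h-1)$; as a scheme $U_h^{2,q}$ is affine space with coordinates $a_1,\dots,a_{2(h-1)}$. For $x=1+\sum a_i\tau^i\in U_h^{2,q}(A)$ let $\iota_h(x)=\begin{pmatrix}1+a_2\pi+a_4\pi^2+\cdots & a_1+a_3\pi+a_5\pi^2+\cdots\\ a_1^q\pi+a_3^q\pi^2+\cdots & 1+a_2^q\pi+a_4^q\pi^2+\cdots\end{pmatrix}$, a matrix over $A[\pi]/(\pi^h)$, and write $\det\iota_h(x)=1+\sum_{k=1}^{h-1}c_k(x)\pi^k$. The subscheme $X_h\subset U_h^{2,q}$ is defined by the condition that $\det\iota_h(x)$ is fixed by the $q$-power Frobenius on coefficients, i.e. $c_k^q=c_k$ for $1\le k\le h-1$.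 *)

(* Defs.v *)
From HB Require Import structures.
From mathcomp Require Import all_boot all_order all_algebra.
Set Implicit Arguments. Unset Strict Implicit. Unset Printing Implicit Defensive.
Import GRing.Theory.
Local Open Scope ring_scope.

Section Defs.
Variables (F : finFieldType) (A : comAlgType F) (h : nat).

(* q = #|F| ; F plays the role of F_q, A is a commutative F_q-algebra. *)
Definition qF : nat := #|F|.

(* The coordinates a_1, ..., a_(2(h-1)) of 1 + sum a_i tau^i; values of
   a outside this range are ignored (read as 0). *)
Definition coord (a : nat -> A) (i : nat) : A :=
  if (0 < i <= 2 * (h - 1))%N then a i else 0.

(* Entries of iota_h(x) as polynomials in pi, truncated below pi^h. *)
Definition iotaD1 (a : nat -> A) : {poly A} :=
  \poly_(j < h) (if j == 0%N then 1 else coord a (2 * j)).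
Definition iotaB (a : nat -> A) : {poly A} :=
  \poly_(j < h) coord a (2 * j).+1.
Definition iotaC (a : nat -> A) : {poly A} :=
  \poly_(j < h) (if j == 0%N then 0 else coord a (2 * j).-1 ^+ qF).
Definition iotaD2 (a : nat -> A) : {poly A} :=
  \poly_(j < h) (if j == 0%N then 1 else coord a (2 * j) ^+ qF).

Definition iota_mx (a : nat -> A) : 'M[{poly A}]_2 :=
  \matrix_(i < 2, j < 2)
    if i == 0 :> nat then (if j == 0 :> nat then iotaD1 a else iotaB a)
    else (if j == 0 :> nat then iotaC a else iotaD2 a).

(* c_k(x): coefficient of pi^k in det iota_h(x) (meaningful for k < h,
   where it equals the coefficient in A[pi]/(pi^h)). *)
Definition c_coef (a : nat -> A) (k : nat) : A := (\det (iota_mx a))`_k.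

Definition in_Xh (a : nat -> A) : Prop :=
  forall k : nat, (1 <= k <= h - 1)%N -> c_coef a k ^+ qF = c_coef a k.

Definition f_even (a : nat -> A) (k : nat) : A :=
  (coord a (2 * k) ^+ (qF ^ 2) - coord a (2 * k))
  + \sum_(1 <= i < 2 * k)
      (-1) ^+ i * coord a i ^+ qF
        * (coord a (2 * k - i) ^+ (qF ^ 2) - coord a (2 * k - i)).

End Defs.

(* Main.v *)
Require Import Defs.
From mathcomp Require Import all_boot all_order all_algebra all_fingroup all_solvable all_field.
From mathcomp Require Import ring zify.
Import GRing.Theory.
Local Open Scope ring_scope.

Section Frob.
Variables (F : finFieldType) (A : comAlgType F).
Local Notation q := (qF F).

Lemma q_gt0 : (0 < q)%N.
Proof. by rewrite /qF; apply/card_gt0P; exists 0. Qed.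

Lemma frobD (x y : A) : (x + y) ^+ q = x ^+ q + y ^+ q.
Proof.
have [p pp pF] := finPcharP F.
apply: exprDn_pchar.
rewrite (eq_pnat _ (pchar_lalg A)) (eq_pnat _ (pcharf_eq pF)).
have := abelem_pgroup (fin_ring_pchar_abelem pF).
by rewrite /pgroup cardsT.
Qed.

Lemma frob0 : (0 : A) ^+ q = 0.
Proof. by rewrite expr0n; case: q q_gt0. Qed.

Lemma frobN (x : A) : (- x) ^+ q = - x ^+ q.
Proof. by apply/eqP; rewrite -subr_eq0 opprK -frobD addNr frob0. Qed.

Lemma frobB (x y : A) : (x - y) ^+ q = x ^+ q - y ^+ q.
Proof. by rewrite frobD frobN. Qed.

Lemma frob_sum (I : Type) (r : seq I) (P : pred I) (G : I -> A) :
  (\sum_(i <- r | P i) G i) ^+ q = \sum_(i <- r | P i) G i ^+ q.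
Proof. exact: (big_morph (fun x => x ^+ q) frobD frob0). Qed.
End Frob.
Lemma det2 (R : comNzRingType) (M : 'M[R]_2) :
  \det M = M 0 0 * M 1 1 - M 0 1 * M 1 0.
Proof.
rewrite (expand_det_row _ 0) !big_ord_recl big_ord0 /cofactor !det_mx11 !mxE /=.
rewrite addr0 !expr0 expr1 mul1r mulN1r mulrN.
by congr (_ * _ - _ * _); congr (M _ _); apply/val_inj.
Qed.

Lemma sum_parity (R : nmodType) (G : nat -> R) k :
  \sum_(0 <= i < (2 * k).+1) G i =
  \sum_(0 <= j < k.+1) G (2 * j)%N + \sum_(0 <= j < k) G (2 * j).+1.
Proof.
elim: k => [|k IH]; first by rewrite muln0 big_nat1 big_nat1 big_geq // addr0.
rewrite mulnS add2n big_nat_recr //= big_nat_recr //= IH.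
rewrite (big_nat_recr k.+1 0 (fun j => G (2 * j)%N)) //=.
rewrite (big_nat_recr k 0 (fun j => G (2 * j).+1)) //= mulnS add2n.
rewrite -!addrA; congr (_ + _).
by rewrite addrA addrC.
Qed.

Section Main.
Variables (F : finFieldType) (A : comAlgType F) (h : nat) (a : nat -> A).
Local Notation q := (qF F).
Definition ee (m : nat) : A := if m == 0%N then 1 else Defs.coord h a m.

Lemma c_expr k : (k < h)%N ->
  c_coef h a k = \sum_(0 <= j < k.+1) ee (2 * j) * ee (2 * (k - j)) ^+ q
               - \sum_(0 <= j < k) ee (2 * j).+1 * ee (2 * (k - j)).-1 ^+ q.
Proof.
move=> kh; rewrite /c_coef det2 !mxE /= coefB !coefM.
rewrite [X in _ - X]big_ord_recr /= subnn [(iotaC _ _)`_0]coef_poly /= if_same mulr0 addr0.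
rewrite !big_mkord; congr (_ - _); apply: eq_bigr => -[j /= jk] _.
  rewrite /iotaD1 /iotaD2 !coef_poly.
  have -> : (j < h)%N by apply: leq_ltn_trans kh; rewrite -ltnS.
  have -> : (k - j < h)%N by apply: leq_ltn_trans (leq_subr _ _) kh.
  by rewrite /ee !muln_eq0 /=; case: eqP; case: eqP; rewrite ?expr1n.
rewrite /iotaB /iotaC !coef_poly.
have -> : (j < h)%N by apply: ltn_trans kh.
have -> : (k - j < h)%N by apply: leq_ltn_trans (leq_subr _ _) kh.
rewrite subn_eq0 leqNgt jk /= /ee.
have -> : ((2 * (k - j)).-1 == 0%N) = false by apply/eqP; lia.
by [].
Qed.

Definition G k i : A :=
  (-1) ^+ i * ee i ^+ q * (ee (2 * k - i) ^+ (q ^ 2) - ee (2 * k - i)).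

Lemma f_expr k : (1 <= k)%N -> f_even h a k = \sum_(0 <= i < (2 * k).+1) G k i.
Proof.
move=> k1; rewrite /f_even [RHS]big_ltn // (big_nat_recr (2 * k)) /=; last by lia.
rewrite /G subnn /ee eqxx !expr1n subrr mulr0 addr0 expr0 !mul1r subn0.
have -> : (2 * k == 0)%N = false by apply/eqP; lia.
congr (_ + _); apply: eq_big_nat => i /andP[i1 i2].
have -> : (i == 0)%N = false by apply/eqP; lia.
by have -> : (2 * k - i == 0)%N = false by apply/eqP; lia.
Qed.

Lemma key k : (1 <= k)%N -> (k < h)%N ->
  c_coef h a k ^+ q - c_coef h a k = f_even h a k.
Proof.
move=> k1 kh; rewrite c_expr // f_expr // sum_parity frobB !frob_sum.
set S1 := \sum_(0 <= j < k.+1) ee (2 * j) * ee (2 * (k - j)) ^+ q.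
set S2 := \sum_(0 <= j < k) ee (2 * j).+1 * ee (2 * (k - j)).-1 ^+ q.
have sg : forall j, (-1) ^+ (2 * j) = 1 :> A by move=> j; rewrite mulnC exprM sqrr_sign.
have qq : forall x : A, x ^+ (q ^ 2) = x ^+ q ^+ q by move=> x; rewrite -mulnn exprM.
have R1 : S1 = \sum_(0 <= j < k.+1) ee (2 * j) ^+ q * ee (2 * (k - j)).
  rewrite /S1 big_nat_rev; apply: eq_big_nat => j /andP[_ jk].
  rewrite add0n subSS mulrC; congr (ee _ ^+ _ * _); lia.
have R2 : S2 = \sum_(0 <= j < k) ee (2 * j).+1 ^+ q * ee (2 * (k - j)).-1.
  rewrite /S2 big_nat_rev; apply: eq_big_nat => j /andP[_ jk].
  rewrite add0n mulrC; congr (ee _ ^+ _ * ee _); lia.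
have H1 : \sum_(0 <= j < k.+1) G k (2 * j) =
   \sum_(0 <= j < k.+1) (ee (2 * j) * ee (2 * (k - j)) ^+ q) ^+ q - S1.
  rewrite R1 -sumrB; apply: eq_big_nat => j /andP[_ jk].
  rewrite /G sg mul1r qq exprMn mulrBr.
  by have -> : (2 * k - 2 * j = 2 * (k - j))%N by lia.
have H2 : \sum_(0 <= j < k) G k (2 * j).+1 =
   S2 - \sum_(0 <= j < k) (ee (2 * j).+1 * ee (2 * (k - j)).-1 ^+ q) ^+ q.
  rewrite R2 -sumrB; apply: eq_big_nat => j /andP[_ jk].
  rewrite /G exprS sg mulr1 mulN1r qq exprMn mulNr mulrBr opprB.
  by have -> : (2 * k - (2 * j).+1 = (2 * (k - j)).-1)%N by lia.
rewrite H1 H2; ring.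
Qed.
End Main.

Theorem theorem4p1 (F : finFieldType) (A : comAlgType F) (h : nat)
  (hh : (2 <= h)%N) (a : nat -> A) :
  in_Xh h a <-> (forall k : nat, (1 <= k <= h - 1)%N -> f_even h a k = 0%R).
Proof.
split=> H k kk; have /andP[k1 kh] := kk; have kh' : (k < h)%N by lia.
  by rewrite -key // (H k kk) subrr.
by apply/eqP; rewrite -subr_eq0 key // H.
Qed.
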